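(* Let $A$ be a commutative unital Rickart C*-algebra and let $a,b\in A$ be self-adjoint with $ab\ge a$. Then $\mathtt{D}_a\le\mathtt{D}_b$ in $L_A$.
   Context: $L_A$ is the distributive lattice freely generated by symbols $\mathtt{D}_a$, $a\in A_{\mathrm{sa}}$, subject to $\mathtt{D}_1=1$, $\mathtt{D}_a\wedge\mathtt{D}_{-a}=0$, $\mathtt{D}_{-b^2}=0$, $\mathtt{D}_{a+b}\le\mathtt{D}_a\vee\mathtt{D}_b$, $\mathtt{D}_{ab}=(\mathtt{D}_a\wedge\mathtt{D}_b)\vee(\mathtt{D}_{-a}\wedge\mathtt{D}_{-b})$. Equivalently $L_A\cong A^+/{\approx}$, where on the positive cone $A^+$ one sets $a\preccurlyeq b$ iff $a\le nb$ for some $n\in\mathbb{N}$, $a\approx b$ iff $a\preccurlyeq b\preccurlyeq a$, and $\mathtt{D}_a$ corresponds to $[a^+]$. A C*-algebra is Rickart if every right annihilator $\{y\mid xy=0\}$ of a single element $x$ is of the form $pA$ for a projection $p$. *)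

(* Defs.v *)
From Stdlib Require Import Reals.
From mathcomp Require Import all_boot all_order.
Set Implicit Arguments.
Unset Strict Implicit.
Unset Printing Implicit Defensive.

Record Cplx := mkC { Cre : R; Cim : R }.
Definition C0 : Cplx := mkC R0 R0.
Definition C1 : Cplx := mkC R1 R0.
Definition Cadd (z w : Cplx) : Cplx := mkC (Rplus (Cre z) (Cre w)) (Rplus (Cim z) (Cim w)).
Definition Cmul (z w : Cplx) : Cplx :=
  mkC (Rminus (Rmult (Cre z) (Cre w)) (Rmult (Cim z) (Cim w)))
      (Rplus (Rmult (Cre z) (Cim w)) (Rmult (Cim z) (Cre w))).
Definition Cconj (z : Cplx) : Cplx := mkC (Cre z) (Ropp (Cim z)).
Definition Cmod (z : Cplx) : R := sqrt (Rplus (Rmult (Cre z) (Cre z)) (Rmult (Cim z) (Cim z))).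

Record CommUnitalCStarAlgebra := {
  cs_car :> Type;
  cs_zero : cs_car;
  cs_one : cs_car;
  cs_add : cs_car -> cs_car -> cs_car;
  cs_opp : cs_car -> cs_car;
  cs_mul : cs_car -> cs_car -> cs_car;
  cs_scal : Cplx -> cs_car -> cs_car;
  cs_star : cs_car -> cs_car;
  cs_norm : cs_car -> R;
  cs_addA : forall x y z, cs_add x (cs_add y z) = cs_add (cs_add x y) z;
  cs_addC : forall x y, cs_add x y = cs_add y x;
  cs_add0l : forall x, cs_add cs_zero x = x;
  cs_addNl : forall x, cs_add (cs_opp x) x = cs_zero;
  cs_mulA : forall x y z, cs_mul x (cs_mul y z) = cs_mul (cs_mul x y) z;
  cs_mulC : forall x y, cs_mul x y = cs_mul y x;
  cs_mul1l : forall x, cs_mul cs_one x = x;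
  cs_mulDl : forall x y z, cs_mul (cs_add x y) z = cs_add (cs_mul x z) (cs_mul y z);
  cs_scalA : forall a b x, cs_scal a (cs_scal b x) = cs_scal (Cmul a b) x;
  cs_scal1 : forall x, cs_scal C1 x = x;
  cs_scalDr : forall a x y, cs_scal a (cs_add x y) = cs_add (cs_scal a x) (cs_scal a y);
  cs_scalDl : forall a b x, cs_scal (Cadd a b) x = cs_add (cs_scal a x) (cs_scal b x);
  cs_scalMl : forall a x y, cs_scal a (cs_mul x y) = cs_mul (cs_scal a x) y;
  cs_starK : forall x, cs_star (cs_star x) = x;
  cs_starD : forall x y, cs_star (cs_add x y) = cs_add (cs_star x) (cs_star y);
  cs_starM : forall x y, cs_star (cs_mul x y) = cs_mul (cs_star y) (cs_star x);
  cs_starZ : forall a x, cs_star (cs_scal a x) = cs_scal (Cconj a) (cs_star x);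
  cs_norm_ge0 : forall x, Rle R0 (cs_norm x);
  cs_norm_eq0 : forall x, cs_norm x = R0 -> x = cs_zero;
  cs_norm_triangle : forall x y, Rle (cs_norm (cs_add x y)) (Rplus (cs_norm x) (cs_norm y));
  cs_normZ : forall a x, cs_norm (cs_scal a x) = Rmult (Cmod a) (cs_norm x);
  cs_normM : forall x y, Rle (cs_norm (cs_mul x y)) (Rmult (cs_norm x) (cs_norm y));
  cs_complete : forall u : nat -> cs_car,
    (forall eps, Rlt R0 eps -> exists N, forall m n, le N m -> le N n ->
        Rlt (cs_norm (cs_add (u m) (cs_opp (u n)))) eps) ->
    exists l, forall eps, Rlt R0 eps -> exists N, forall n, le N n ->
        Rlt (cs_norm (cs_add (u n) (cs_opp l))) eps;
  cs_cstar : forall x, cs_norm (cs_mul (cs_star x) x) = Rmult (cs_norm x) (cs_norm x)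
}.

Section CStarDefs.
Variable A : CommUnitalCStarAlgebra.

Definition cs_sub (x y : A) : A := cs_add x (cs_opp y).

Definition selfadj (x : A) : Prop := cs_star x = x.

Definition invertible (x : A) : Prop :=
  exists y : A, cs_mul x y = cs_one A.

(* positive elements: self-adjoint with spectrum contained in [0, +oo) *)
Definition is_pos (x : A) : Prop :=
  selfadj x /\
  forall l : Cplx, (Cim l <> R0 \/ Rlt (Cre l) R0) ->
    invertible (cs_sub x (cs_scal l (cs_one A))).

Definition cs_ge (x y : A) : Prop := is_pos (cs_sub x y).

Definition projection (p : A) : Prop := cs_star p = p /\ cs_mul p p = p.

Definition Rickart : Prop :=
  forall x : A, exists p : A, projection p /\
    forall y : A, cs_mul x y = cs_zero A <-> exists z : A, y = cs_mul p z.
End CStarDefs.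

(* A map D : A_sa -> L (extended arbitrarily outside A_sa) satisfying the
   defining relations of L_A. *)
Definition LA_model (A : CommUnitalCStarAlgebra) (d : Order.disp_t)
    (L : tbDistrLatticeType d) (D : A -> L) : Prop :=
  D (cs_one A) = \top%O /\
  (forall a, selfadj a -> (D a `&` D (cs_opp a))%O = \bot%O) /\
  (forall b, selfadj b -> D (cs_opp (cs_mul b b)) = \bot%O) /\
  (forall a b, selfadj a -> selfadj b -> (D (cs_add a b) <= D a `|` D b)%O) /\
  (forall a b, selfadj a -> selfadj b ->
     D (cs_mul a b) = ((D a `&` D b) `|` (D (cs_opp a) `&` D (cs_opp b)))%O).

(* D_a <= D_b in the distributive lattice L_A presented by generators and
   relations: equivalently, it holds in every bounded distributive lattice
   model of the relations. *)
Definition LA_le (A : CommUnitalCStarAlgebra) (a b : A) : Prop :=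
  forall (d : Order.disp_t) (L : tbDistrLatticeType d) (D : A -> L),
    LA_model D -> (D a <= D b)%O.

(* Main.v *)
Require Import Defs.
From Stdlib Require Import Reals Lra Ring.
From mathcomp Require Import all_boot all_order.

Section CS.
Variable A : CommUnitalCStarAlgebra.
Local Notation one := (cs_one A).
Local Notation zero := (cs_zero A).
Local Notation ad := (@cs_add A).
Local Notation ml := (@cs_mul A).
Local Notation op := (@cs_opp A).
Local Notation sb := (@cs_sub A).
Local Notation st := (@cs_star A).
Local Notation nrm := (@cs_norm A).
Local Notation rs r x := (@cs_scal A (mkC r 0) x).
Local Open Scope R_scope.

Lemma A_ring : ring_theory zero one ad ml sb op (@eq A).
Proof.
constructor.
- exact: cs_add0l.
- exact: cs_addC.
- exact: cs_addA.
- exact: cs_mul1l.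
- exact: cs_mulC.
- exact: cs_mulA.
- exact: cs_mulDl.
- by [].
- move=> x; rewrite cs_addC; exact: cs_addNl.
Qed.
Add Ring Aring : A_ring.

Lemma sub0_eq (x y : A) : sb x y = zero -> x = y.
Proof. move=> H. transitivity (ad (sb x y) y); first by rewrite /cs_sub; ring.
rewrite H; ring. Qed.

Lemma add_self0 (x : A) : x = ad x x -> x = zero.
Proof. move=> H. transitivity (ad (ad x x) (op x)); first ring. rewrite -H; ring. Qed.

Lemma rs_add r s (x : A) : ad (rs r x) (rs s x) = rs (r + s) x.
Proof. rewrite -cs_scalDl /Cadd /=. by rewrite Rplus_0_l. Qed.

Lemma rs0 (x : A) : rs 0 x = zero.
Proof. apply: add_self0. by rewrite rs_add Rplus_0_l. Qed.

Lemma rs_mul r s (x : A) : rs r (rs s x) = rs (r * s) x.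
Proof. rewrite cs_scalA /Cmul /=. congr cs_scal; f_equal; ring. Qed.

Lemma rs1 (x : A) : rs 1 x = x.
Proof. exact: cs_scal1. Qed.

Lemma rsN1 (x : A) : rs (-1) x = op x.
Proof. have H : ad x (rs (-1) x) = zero.
  by rewrite -{1}(rs1 x) rs_add Rplus_opp_r rs0.
transitivity (ad (op x) (ad x (rs (-1) x))); first ring. rewrite H; ring. Qed.

Lemma rsD r (x y : A) : rs r (ad x y) = ad (rs r x) (rs r y).
Proof. exact: cs_scalDr. Qed.

Lemma rsMl r (x y : A) : rs r (ml x y) = ml (rs r x) y.
Proof. exact: cs_scalMl. Qed.

Lemma rsMr r (x y : A) : rs r (ml x y) = ml x (rs r y).
Proof. by rewrite cs_mulC rsMl cs_mulC. Qed.

Definition kr (r : R) : A := rs r one.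

Lemma rs_k r (x : A) : rs r x = ml (kr r) x.
Proof. by rewrite /kr -rsMl cs_mul1l. Qed.

Lemma kr_add r s : ad (kr r) (kr s) = kr (r + s).
Proof. exact: rs_add. Qed.

Lemma kr1 : kr 1 = one.
Proof. exact: rs1. Qed.

Lemma kr_mul r s : ml (kr r) (kr s) = kr (r * s).
Proof. by rewrite -rs_k /kr rs_mul. Qed.

Lemma kr0 : kr 0 = zero.
Proof. exact: rs0. Qed.

Lemma kr_opp r : op (kr r) = kr (- r).
Proof. rewrite /kr -rsN1 rs_mul. congr (rs _ _); ring. Qed.

Lemma rs_opp r (x : A) : rs r (op x) = op (rs r x).
Proof. by rewrite -!rsN1 !rs_mul Rmult_comm. Qed.

Lemma rs_sub r (x y : A) : rs r (sb x y) = sb (rs r x) (rs r y).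
Proof. by rewrite /cs_sub rsD rs_opp. Qed.

Lemma rs_star r (x : A) : st (rs r x) = rs r (st x).
Proof. rewrite cs_starZ /Cconj /=. by rewrite Ropp_0. Qed.

Lemma rs_norm r (x : A) : nrm (rs r x) = Rabs r * nrm x.
Proof. rewrite cs_normZ /Cmod /=. rewrite Rmult_0_l Rplus_0_r.
change (r * r) with (Rsqr r); by rewrite sqrt_Rsqr_abs. Qed.

Lemma star0 : st zero = zero.
Proof. by rewrite -{1}(rs0 zero) rs_star rs0. Qed.

Lemma starN (x : A) : st (op x) = op (st x).
Proof. by rewrite -!rsN1 rs_star. Qed.

Lemma starB (x y : A) : st (sb x y) = sb (st x) (st y).
Proof. by rewrite /cs_sub cs_starD starN. Qed.

Lemma star1 : st one = one.
Proof.
have E : st one = ml (st one) one by rewrite cs_mulC cs_mul1l.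
rewrite -{2}(cs_starK one) -{2}(cs_starK (st one)) E cs_starM cs_starK.
by rewrite cs_mulC cs_mul1l cs_starK.
Qed.

Lemma norm0 : nrm zero = 0.
Proof. by rewrite -{1}(rs0 zero) rs_norm Rabs_R0 Rmult_0_l. Qed.

Lemma normN (x : A) : nrm (op x) = nrm x.
Proof. by rewrite -rsN1 rs_norm Rabs_Ropp Rabs_R1 Rmult_1_l. Qed.

Lemma normB_sym (x y : A) : nrm (sb x y) = nrm (sb y x).
Proof. rewrite -normN. congr nrm. rewrite /cs_sub; ring. Qed.

Lemma normB_tri (x y z : A) : nrm (sb x z) <= nrm (sb x y) + nrm (sb y z).
Proof. have -> : sb x z = ad (sb x y) (sb y z) by rewrite /cs_sub; ring.
exact: cs_norm_triangle. Qed.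

Lemma normM (x y : A) : nrm (ml x y) <= nrm x * nrm y.
Proof. exact: cs_normM. Qed.

Lemma norm_ge0 (x : A) : 0 <= nrm x.
Proof. exact: cs_norm_ge0. Qed.

Lemma norm_star_le (x : A) : nrm x <= nrm (st x).
Proof.
have H := cs_cstar x. have H2 := cs_normM (st x) x.
have Hx := norm_ge0 x. have Hs := norm_ge0 (st x).
destruct (Req_dec (nrm x) 0) as [E|E]; first lra.
rewrite H in H2. nra.
Qed.

Lemma norm_star (x : A) : nrm (st x) = nrm x.
Proof. apply: Rle_antisym; last exact: norm_star_le.
by rewrite -{2}(cs_starK x); apply: norm_star_le. Qed.

Lemma norm1 : nrm one <= 1.
Proof. have H := cs_cstar one. rewrite star1 cs_mul1l in H.
have := norm_ge0 one. nra. Qed.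

Lemma eq_small (x y : A) : (forall eps, 0 < eps -> nrm (sb x y) < eps) -> x = y.
Proof. move=> H. apply: sub0_eq. apply: cs_norm_eq0.
have := norm_ge0 (sb x y). destruct (Req_dec (nrm (sb x y)) 0) as [E|E] => // H0.
have := H (nrm (sb x y)). lra. Qed.


Definition cvs (u : nat -> A) (l : A) := forall eps, 0 < eps ->
  exists N, forall n, le N n -> nrm (sb (u n) l) < eps.

Lemma telescope (x : nat -> A) (u : nat -> R) :
  (forall k, nrm (sb (x (S k)) (x k)) <= u (S k) - u k) ->
  forall n d, nrm (sb (x (n + d)%N) (x n)) <= u (n + d)%N - u n.
Proof.
move=> H n; elim=> [|d IH].
  rewrite addn0. have -> : sb (x n) (x n) = zero by rewrite /cs_sub; ring.
  rewrite norm0; lra.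
rewrite addnS. have := normB_tri (x (n + d).+1) (x (n + d)%N) (x n).
have := H (n + d)%N. lra.
Qed.

Lemma mono_cauchy (u : nat -> R) B : (forall k, u k <= u (S k)) -> (forall k, u k <= B) ->
  forall eps, 0 < eps -> exists N, forall m n, le N n -> le n m -> u m - u n < eps.
Proof.
move=> Hg Hb eps He.
have Hbd : bound (EUn u).
  exists B => y [i ->]; exact: Hb.
have [l Hl] := growing_cv u Hg Hbd.
have [N HN] := Hl eps He.
exists N => m n HNn Hnm.
have := growing_ineq u l Hg Hl m. have := HN n HNn. rewrite /R_dist.
move/Rabs_def2 => [H1 H2]. lra.
Qed.

Lemma majorant (x : nat -> A) (u : nat -> R) :
  (forall k, nrm (sb (x (S k)) (x k)) <= u (S k) - u k) ->
  (forall eps, 0 < eps -> exists N, forall m n, le N n -> le n m -> u m - u n < eps) ->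
  exists l, cvs x l.
Proof.
move=> Hs Hc.
have T := @telescope x u Hs.
have [l Hl] : exists l : A, forall eps, 0 < eps -> exists N, forall n, le N n ->
        nrm (cs_add (x n) (cs_opp l)) < eps.
  apply: cs_complete => eps He.
  have [N HN] := Hc eps He. exists N => m n Hm Hn.
  change (nrm (sb (x m) (x n)) < eps).
  have [Hnm|Hmn] := Nat.le_ge_cases n m.
  - have E : m = (n + (m - n))%N by apply/eqP; rewrite subnKC //; apply/leP.
    rewrite E. have := T n (m - n)%N. rewrite -E. have := HN m n Hn Hnm. lra.
  - rewrite normB_sym.
    have E : n = (m + (n - m))%N by apply/eqP; rewrite subnKC //; apply/leP.
    rewrite E. have := T m (n - m)%N. rewrite -E. have := HN n m Hm Hmn. lra.
exists l => eps He. have [N HN] := Hl eps He. exists N => n Hn. exact: HN.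
Qed.


Lemma neumann (z : A) : nrm z < 1 -> exists w, ml (sb one z) w = one.
Proof.
move=> Hz. set q := nrm z. have Hq0 : 0 <= q := norm_ge0 z. have Hq1 : q < 1 := Hz.
pose x := fix f (k : nat) : A := match k with 0 => zero | S k => ad one (ml z (f k)) end.
have Hd : forall k, nrm (sb (x (S k)) (x k)) <= q ^ k.
  elim=> [|k IH].
    have -> : sb (x 1%N) (x 0%N) = one by rewrite /= /cs_sub; ring.
    rewrite /=; exact: norm1.
  have -> : sb (x k.+2) (x k.+1) = ml z (sb (x k.+1) (x k)) by rewrite /= /cs_sub; ring.
  apply: Rle_trans (normM _ _) _. rewrite /= -/q.
  apply: Rmult_le_compat_l => //.
pose u k := (1 - q ^ k) / (1 - q).
have [l Hl] : exists l, cvs x l.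
  apply: (@majorant x u).
    move=> k. have -> : u (S k) - u k = q ^ k by rewrite /u /=; field; lra.
    exact: Hd.
  apply: (@mono_cauchy u (1 / (1 - q))).
    move=> k; rewrite /u /=. apply: Rmult_le_compat_r.
      apply: Rlt_le; apply: Rinv_0_lt_compat; lra.
    have := pow_le q k Hq0. nra.
  move=> k; rewrite /u. apply: Rmult_le_compat_r.
    apply: Rlt_le; apply: Rinv_0_lt_compat; lra.
  have := pow_le q k Hq0. lra.
have E : l = ad one (ml z l).
  apply: eq_small => eps He.
  have [N HN] := Hl (eps / 2) ltac:(lra).
  have H1 := HN N (le_n N). have H2 := HN (S N) (le_S _ _ (le_n N)).
  have H3 : sb (x (S N)) (ad one (ml z l)) = ml z (sb (x N) l) by rewrite /= /cs_sub; ring.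
  have H4 := normM z (sb (x N) l).
  have := normB_tri l (x (S N)) (ad one (ml z l)).
  rewrite (normB_sym l (x (S N))) H3. have := norm_ge0 (sb (x N) l). nra.
exists l. transitivity (sb l (ml z l)); first by rewrite /cs_sub; ring.
rewrite {1}E /cs_sub; ring.
Qed.

Lemma sqrt_ex (y : A) : st y = y -> nrm y <= 1 -> exists s, st s = s /\ ml s s = sb one y.
Proof.
move=> Hy Hy1.
pose t := fix f (k : nat) : A := match k with 0 => zero | S k => rs (/2) (ad y (ml (f k) (f k))) end.
pose u := fix g (k : nat) : R := match k with 0 => 0 | S k => (1 + g k * g k) / 2 end.
have Hu : forall k, 0 <= u k <= 1.
  elim=> [|k IH] /=; nra.
have Hug : forall k, u k <= u (S k).
  move=> k /=. have := Hu k. nra.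
have Ht : forall k, nrm (t k) <= u k /\ st (t k) = t k.
  elim=> [|k [IH1 IH2]] /=.
    by rewrite norm0 star0; split; [lra|].
  split.
    rewrite rs_norm. apply: Rle_trans (Rmult_le_compat_l _ _ _ _ (cs_norm_triangle _ _)) _.
      rewrite Rabs_pos_eq; lra.
    have := normM (t k) (t k). have := norm_ge0 (t k). have := Hu k.
    rewrite Rabs_pos_eq; [nra|lra].
  by rewrite rs_star cs_starD cs_starM IH2 Hy.
have Hd : forall k, nrm (sb (t (S k)) (t k)) <= u (S k) - u k.
  elim=> [|k IH].
    have -> : sb (t 1%N) (t 0%N) = rs (/2) y.
      rewrite /=. have -> : ml zero zero = zero by ring.
      have -> : ad y zero = y by ring. rewrite /cs_sub; ring.
    rewrite rs_norm /= Rabs_pos_eq; lra.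
  have -> : sb (t k.+2) (t k.+1) = rs (/2) (ml (ad (t k.+1) (t k)) (sb (t k.+1) (t k))).
    rewrite [t k.+2]/= [t k.+1]/= -rs_sub. congr cs_scal. rewrite /cs_sub; ring.
  rewrite rs_norm Rabs_pos_eq; last lra.
  have H1 := normM (ad (t k.+1) (t k)) (sb (t k.+1) (t k)).
  have H2 := cs_norm_triangle (t k.+1) (t k).
  have [H3 _] := Ht k. have [H4 _] := Ht k.+1.
  have H5 := norm_ge0 (sb (t k.+1) (t k)).
  have H6 := norm_ge0 (ad (t k.+1) (t k)).
  have -> : u k.+2 - u k.+1 = / 2 * ((u k.+1 + u k) * (u k.+1 - u k)).
    rewrite [u k.+2]/= [u k.+1]/=. field.
  apply: Rmult_le_compat_l; first lra.
  apply: Rle_trans H1 _. apply: Rmult_le_compat => //. lra.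
have [l Hl] : exists l, cvs t l.
  apply: (@majorant t u Hd). exact: (@mono_cauchy u 1 Hug (fun k => proj2 (Hu k))).
have Hlst : st l = l.
  apply: eq_small => eps He.
  have [N HN] := Hl (eps / 2) ltac:(lra).
  have H1 := HN N (le_n N).
  have := normB_tri (st l) (st (t N)) l. rewrite -starB norm_star (proj2 (Ht N)).
  rewrite (normB_sym l (t N)). lra.
pose W := rs (/2) (ad y (ml l l)).
have E : l = W.
  apply: eq_small => eps He.
  set M := 1 + nrm l. have HM : 1 <= M by have := norm_ge0 l; rewrite /M; lra.
  have [N HN] := Hl (eps / (2 * M)) ltac:(apply: Rdiv_lt_0_compat; lra).
  have H1 := HN N (le_n N). have H2 := HN (S N) (le_S _ _ (le_n N)).
  have H3 : sb (t (S N)) W = rs (/2) (ml (ad (t N) l) (sb (t N) l)).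
    rewrite /W [t N.+1]/= -rs_sub. congr cs_scal. rewrite /cs_sub; ring.
  have := normB_tri l (t (S N)) W. rewrite (normB_sym l (t (S N))) H3 rs_norm.
  rewrite Rabs_pos_eq; last lra.
  have H4 := normM (ad (t N) l) (sb (t N) l).
  have H5 := cs_norm_triangle (t N) l.
  have [H6 _] := Ht N. have HuN := Hu N.
  have H7 := norm_ge0 (sb (t N) l). have H8 := norm_ge0 (ad (t N) l).
  have H9 : nrm (ad (t N) l) <= M by rewrite /M; lra.
  have H10 : nrm (ad (t N) l) * nrm (sb (t N) l) <= M * (eps / (2 * M)).
    apply: Rmult_le_compat => //; lra.
  have H11 : M * (eps / (2 * M)) = eps / 2 by field; lra.
  have H12 : eps / (2 * M) <= eps / 2.
    apply: Rmult_le_compat_l; first lra. apply: Rinv_le_contravar; lra.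
  lra.
have E2 : ad l l = ad y (ml l l).
  rewrite {1 2}E /W rs_add. have -> : / 2 + / 2 = 1 by field. exact: rs1.
exists (sb one l). split.
  by rewrite starB star1 Hlst.
transitivity (sb (ad one (ml l l)) (ad l l)); first by rewrite /cs_sub; ring.
rewrite E2 /cs_sub; ring.
Qed.


Lemma scal_mr a (x y : A) : ml x (cs_scal a y) = cs_scal a (ml x y).
Proof. by rewrite cs_mulC -cs_scalMl cs_mulC. Qed.

Lemma kr_sub r s : sb (kr r) (kr s) = kr (r - s).
Proof. by rewrite /cs_sub kr_opp kr_add. Qed.

Lemma sos (g p : A) : st g = g -> st p = p ->
  nrm g * nrm g <= nrm (ad (ml g g) (ml p p)).
Proof.
move=> Hg Hp.
pose ci := mkC 0 1. pose cmi := mkC 0 (Ropp 1).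
have E2 : forall q : A, ad (cs_scal ci q) (cs_scal cmi q) = zero.
  move=> q. rewrite -cs_scalDl.
  have -> : Cadd ci cmi = mkC 0 0 by rewrite /Cadd /=; f_equal; ring.
  exact: rs0.
have E1 : ml (cs_scal cmi p) (cs_scal ci p) = ml p p.
  rewrite -cs_scalMl scal_mr cs_scalA.
  have -> : Cmul cmi ci = mkC 1 0 by rewrite /Cmul /=; f_equal; ring.
  exact: rs1.
pose x := ad g (cs_scal ci p).
have Hsx : st x = ad g (cs_scal cmi p).
  by rewrite /x cs_starD cs_starZ Hg Hp.
have Hxx : ml (st x) x = ad (ml g g) (ml p p).
  rewrite Hsx.
  transitivity (ad (ml g g) (ad (ad (ml g (cs_scal ci p)) (ml (cs_scal cmi p) g))
      (ml (cs_scal cmi p) (cs_scal ci p)))); first by rewrite /x; ring.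
  rewrite E1 scal_mr -cs_scalMl (cs_mulC p g) E2. ring.
have Hgg : ad x (st x) = rs 2 g.
  rewrite Hsx. transitivity (ad (ad g g) (ad (cs_scal ci p) (cs_scal cmi p))); first by rewrite /x; ring.
  rewrite E2 -{1 2}(rs1 g) rs_add. have -> : 1 + 1 = 2 by ring. ring.
have H1 := cs_norm_triangle x (st x). rewrite Hgg rs_norm norm_star Rabs_pos_eq in H1; last lra.
have H2 := cs_cstar x. rewrite Hxx in H2. rewrite H2.
have := norm_ge0 g. nra.
Qed.

Lemma inv_sa (r v : A) : st r = r -> ml r v = one -> st v = v.
Proof.
move=> Hr Hv.
have H : ml (st v) r = one by rewrite -{1}Hr -cs_starM Hv star1.
transitivity (ml (ml (st v) r) v); last by rewrite H cs_mul1l.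
by rewrite -cs_mulA Hv cs_mulC cs_mul1l.
Qed.


Lemma pos_sqrt (c : A) : is_pos c -> exists s, st s = s /\ ml s s = c.
Proof.
move=> [Hc Hspec]. rewrite /selfadj in Hc.
set K := nrm c + 1.
have HK : 0 < K by have := norm_ge0 c; rewrite /K; lra.
pose e := rs (/K) c.
have He : nrm e < 1.
  rewrite /e rs_norm Rabs_pos_eq; last by apply: Rlt_le; apply: Rinv_0_lt_compat.
  apply: (Rmult_lt_reg_l K) => //. rewrite -Rmult_assoc Rinv_r; last lra.
  rewrite /K; lra.
have Hse : st e = e by rewrite /e rs_star Hc.
pose h := sb one e.
have Hsh : st h = h by rewrite /h starB star1 Hse.
have Hh : nrm h <= 1.
  destruct (Rle_lt_dec (nrm h) 1) as [H|Hm] => //. exfalso.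
  set m := nrm h in Hm.
  pose g := rs (/m) h.
  have Hg : nrm g = 1.
    rewrite /g rs_norm Rabs_pos_eq; last by apply: Rlt_le; apply: Rinv_0_lt_compat; lra.
    rewrite -/m. field. lra.
  have Hsg : st g = g by rewrite /g rs_star Hsh.
  have [w1 Hw1] : exists w1, ml (sb one g) w1 = one.
    have Hl : Cim (mkC (K * (1 - m)) 0) <> 0 \/ Cre (mkC (K * (1 - m)) 0) < 0.
      right; rewrite /=; nra.
    have [w Hw] := Hspec (mkC (K * (1 - m)) 0) Hl.
    have Ew : rs (m * K) (sb one g) = sb c (cs_scal (mkC (K * (1 - m)) 0) one).
      rewrite -/(kr (K * (1 - m))) /g /h /e.
      transitivity (ad (sb (kr (m * K)) (ml (kr (m * K)) (kr (/m))))
                       (ml (ml (ml (kr (m * K)) (kr (/m))) (kr (/K))) c)).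
        by rewrite !rs_k /cs_sub; ring.
      rewrite !kr_mul. have -> : m * K * / m = K by field; lra.
      have -> : K * / K = 1 by field; lra.
      rewrite kr1 kr_sub. transitivity (ad c (kr (m * K - K))); first ring.
      rewrite /cs_sub kr_opp. congr (ad c (kr _)). ring.
    exists (rs (m * K) w). by rewrite -rsMr rsMl Ew.
  have [w2 Hw2] : exists w2, ml (ad one g) w2 = one.
    pose z := rs (/(m + 1)) e.
    have Hz : nrm z < 1.
      rewrite /z rs_norm Rabs_pos_eq; last by apply: Rlt_le; apply: Rinv_0_lt_compat; lra.
      have := norm_ge0 e. have : / (m + 1) < 1 by rewrite -Rinv_1; apply: Rinv_lt_contravar; lra.
      have : 0 < / (m + 1) by apply: Rinv_0_lt_compat; lra. nra.
    have [v Hv] := @neumann z Hz.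
    have Ez : rs m (ad one g) = rs (m + 1) (sb one z).
      rewrite /g /h /z.
      transitivity (sb (ad (kr m) (ml (kr m) (kr (/m)))) (ml (ml (kr m) (kr (/m))) e)).
        by rewrite !rs_k /cs_sub; ring.
      transitivity (sb (kr (m + 1)) (ml (ml (kr (m + 1)) (kr (/(m + 1)))) e)); last first.
        by rewrite !rs_k /cs_sub; ring.
      rewrite !kr_mul. have -> : m * / m = 1 by field; lra.
      have -> : (m + 1) * / (m + 1) = 1 by field; lra.
      by rewrite kr_add.
    exists (rs (/(m + 1)) (rs m v)).
    rewrite -!rsMr rsMl Ez -rsMl Hv rs_mul.
    have -> : / (m + 1) * (m + 1) = 1 by field; lra.
    exact: rs1.
  have [s1 [Hs1 Es1]] := @sqrt_ex g Hsg (Req_le _ _ Hg).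
  have [s2 [Hs2 Es2]] : exists s2, st s2 = s2 /\ ml s2 s2 = ad one g.
    have Hng : st (op g) = op g by rewrite starN Hsg.
    have Hn1 : nrm (op g) <= 1 by rewrite normN Hg; lra.
    have [s [H1 H2]] := @sqrt_ex (op g) Hng Hn1. exists s. split => //.
    rewrite H2 /cs_sub; ring.
  pose r := ml s1 s2.
  have Hsr : st r = r by rewrite /r cs_starM Hs1 Hs2 cs_mulC.
  pose v := ml (ml s1 w1) (ml s2 w2).
  have Hrv : ml r v = one.
    transitivity (ml (ml (ml s1 s1) w1) (ml (ml s2 s2) w2)); first by rewrite /r /v; ring.
    rewrite Es1 Es2 Hw1 Hw2; ring.
  have Hsv : st v = v := @inv_sa r v Hsr Hrv.
  have Hrr : ml r r = sb one (ml g g).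
    transitivity (ml (ml s1 s1) (ml s2 s2)); first by rewrite /r; ring.
    rewrite Es1 Es2 /cs_sub; ring.
  set V := Rmax (nrm v) 1.
  have HV1 : 1 <= V := Rmax_r _ _.
  have HVv : nrm v <= V := Rmax_l _ _.
  pose d := / (V * V).
  have Hd0 : 0 < d by apply: Rinv_0_lt_compat; nra.
  have Hd1 : d <= 1.
    rewrite /d -Rinv_1. apply: Rinv_le_contravar; nra.
  pose y := rs d (ml v v).
  have Hsy : st y = y by rewrite /y rs_star cs_starM Hsv.
  have Hy1 : nrm y <= 1.
    rewrite /y rs_norm Rabs_pos_eq; last lra.
    have H1 := normM v v. have H2 := norm_ge0 v. have H3 := norm_ge0 (ml v v).
    have H4 : nrm v * nrm v <= V * V by nra.
    have H5 : d * (V * V) = 1 by rewrite /d; field; nra.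
    nra.
  have [q [Hsq Eq]] := @sqrt_ex y Hsy Hy1.
  pose p := ml r q.
  have Hsp : st p = p by rewrite /p cs_starM Hsq Hsr cs_mulC.
  have Key : ad (ml g g) (ml p p) = kr (1 - d).
    transitivity (ad (ml g g) (ml (ml r r) (ml q q))); first by rewrite /p; ring.
    rewrite Eq /y rs_k.
    transitivity (sb (ad (ml g g) (ml r r)) (ml (kr d) (ml (ml r v) (ml r v)))).
      by rewrite /cs_sub; ring.
    rewrite Hrv Hrr -kr_sub kr1. rewrite /cs_sub; ring.
  have := @sos g p Hsg Hsp. rewrite Key Hg /kr rs_norm Rabs_pos_eq; last lra.
  have := norm1. have := norm_ge0 one. nra.
have [s [Hs Es]] := @sqrt_ex h Hsh Hh.
exists (rs (sqrt K) s). split.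
  by rewrite rs_star Hs.
rewrite -rsMl -rsMr rs_mul sqrt_sqrt; last lra.
have -> : ml s s = e by rewrite Es /h /cs_sub; ring.
rewrite /e rs_mul. have -> : K * / K = 1 by field; lra. exact: rs1.
Qed.


Lemma decomp (a b : A) : a = ad (ml a b) (op (sb (ml a b) a)).
Proof. rewrite /cs_sub; ring. Qed.

End CS.

Import Order.TTheory.

Theorem lemma5 (A : CommUnitalCStarAlgebra) (hR : Rickart A) (a b : A)
  (ha : selfadj a) (hb : selfadj b) (hab : cs_ge (cs_mul a b) a) :
  LA_le a b.
Proof.
move=> d L D [H1 [H2 [H3 [H4 H5]]]].
have [s [Hs Es]] := @pos_sqrt A _ hab.
have Hab : selfadj (cs_mul a b).
  by rewrite /selfadj cs_starM ha hb cs_mulC.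
have Hnc : selfadj (cs_opp (cs_sub (cs_mul a b) a)).
  by rewrite /selfadj starN starB Hab ha.
have Hbot : D (cs_opp (cs_sub (cs_mul a b) a)) = \bot%O.
  rewrite -Es. exact: H3.
have Hle := H4 _ _ Hab Hnc.
rewrite -decomp Hbot joinx0 (H5 _ _ ha hb) in Hle.
have Hm := H2 a ha.
have Hle2 : (D a <= D a `&` ((D a `&` D b) `|` (D (cs_opp a) `&` D (cs_opp b))))%O.
  by rewrite lexI lexx Hle.
rewrite meetUr (meetA (D a) (D (cs_opp a))) Hm meet0x
  joinx0 in Hle2.
apply: le_trans Hle2 _.
apply: le_trans (leIr _ _) _.
exact: leIr.
Qed.
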